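(* Let $\Omega$ be a finite set, $V_\Omega=\mathbb{R}^\Omega$, and $V_\Upsilon,V_\Gamma\le V_\Omega$. Let $\mathcal{P}$, $\mathcal{Q}$, $\mathcal{R}$ be orthogonal decompositions of $V_\Omega$, $V_\Upsilon$, $V_\Gamma$, respectively, and write $\mathbf{I}_{\mathcal{R}}=\sum_{\mathbf{R}\in\mathcal{R}}\mathbf{R}$. Suppose $\mathcal{Q}$ and $\mathcal{R}$ are both structure balanced in relation to $\mathcal{P}$, with efficiency factors $\lambda_{\mathbf{PQ}}$ and $\lambda_{\mathbf{PR}}$, and suppose that for all $\mathbf{P}\in\mathcal{P}$ and $\mathbf{Q}\in\mathcal{Q}$, if $\mathbf{PQ}\neq\mathbf{0}$ and $\mathbf{P}\mathbf{I}_{\mathcal{R}}\neq\mathbf{0}$ then $\mathbf{P}\vartriangleright\mathbf{Q}=\mathbf{P}$. Then $\mathcal{R}$ is structure balanced in relation to $\mathcal{P}\vartriangleright\mathcal{Q}$, with $\lambda_{\mathbf{P}\vartriangleright\mathbf{Q},\mathbf{R}}=\lambda_{\mathbf{PR}}$ whenever $\lambda_{\mathbf{PQ}}\neq0$, and $\lambda_{\mathbf{P}\vdash\mathcal{Q},\mathbf{R}}=\lambda_{\mathbf{PR}}$ whenever $\mathbf{P}\vdash\mathcal{Q}\neq\mathbf{0}$. Moreover, $$(\mathcal{P}\vartriangleright\mathcal{Q})\vartriangleright\mathcal{R}=\{\mathbf{P}\vartriangleright\mathbf{R}:\mathbf{P}\in\mathcal{P},\mathbf{R}\in\mathcal{R},\lambda_{\mathbf{PR}}\neq0\}\cup\{\mathbf{P}\vdash\mathcal{R}:\mathbf{P}\in\mathcal{P},\mathbf{P}\mathbf{I}_{\mathcal{R}}\neq\mathbf{0}\}$$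 $$\cup\{\mathbf{P}\vartriangleright\mathbf{Q}:\mathbf{P}\in\mathcal{P},\mathbf{Q}\in\mathcal{Q},\lambda_{\mathbf{PQ}}\neq0,\mathbf{P}\mathbf{I}_{\mathcal{R}}=\mathbf{0}\}\cup\{\mathbf{P}\vdash\mathcal{Q}:\mathbf{P}\in\mathcal{P},\mathbf{P}\mathbf{I}_{\mathcal{R}}=\mathbf{0}\}.$$
   Context: $V_\Omega$ carries the standard inner product; all matrices are $\Omega\times\Omega$. An orthogonal decomposition of a subspace $W\le V_\Omega$ is a finite set of nonzero symmetric idempotent matrices that are mutually orthogonal and whose sum is the orthogonal projector onto $W$; when a decomposition is described by a list, zero matrices are discarded. For projectors $\mathbf{A},\mathbf{B}$: $\mathbf{B}$ has first-order balance in relation to $\mathbf{A}$ if $\mathbf{BAB}=\lambda_{\mathbf{AB}}\mathbf{B}$ for a scalar $\lambda_{\mathbf{AB}}$ (efficiency factor); $\lambda_{\mathbf{AB}}=0$ iff $\mathbf{AB}=\mathbf{0}$; if $\lambda_{\mathbf{AB}}\ne0$, $\mathbf{A}\vartriangleright\mathbf{B}=\lambda_{\mathbf{AB}}^{-1}\mathbf{ABA}$. A set $\mathcal{B}$ of projectors is structure balanced in relation to a set $\mathcal{A}$ of mutually orthogonal projectors if every $\mathbf{B}\in\mathcal{B}$ has first-order balance in relation to every $\mathbf{A}\in\mathcal{A}$, and $\mathbf{B}_1\mathbf{A}\mathbf{B}_2=\mathbf{0}$ for all $\mathbf{A}\in\mathcal{A}$ and distinct $\mathbf{B}_1,\mathbf{B}_2\in\mathcal{B}$.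 Then for $\mathbf{A}\in\mathcal{A}$, $\mathbf{A}\vdash\mathcal{B}=\mathbf{A}-\sum'_{\mathbf{B}}\mathbf{A}\vartriangleright\mathbf{B}$ (sum over $\mathbf{B}$ with $\lambda_{\mathbf{AB}}\ne0$), and $\mathcal{A}\vartriangleright\mathcal{B}=\{\mathbf{A}\vartriangleright\mathbf{B}:\mathbf{A}\in\mathcal{A},\mathbf{B}\in\mathcal{B},\lambda_{\mathbf{AB}}\neq0\}\cup\{\mathbf{A}\vdash\mathcal{B}:\mathbf{A}\in\mathcal{A}\}$ (zeros discarded). $\lambda_{\mathbf{P}\vartriangleright\mathbf{Q},\mathbf{R}}$ and $\lambda_{\mathbf{P}\vdash\mathcal{Q},\mathbf{R}}$ denote the efficiency factors of $\mathbf{R}$ in relation to $\mathbf{P}\vartriangleright\mathbf{Q}$ and $\mathbf{P}\vdash\mathcal{Q}$. *)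

(* Defs.v *)
(* Matrices over a real field R, indexed by 'I_n (Omega = 'I_n). *)
From HB Require Import structures.
From mathcomp Require Import all_boot all_order all_algebra.
From Stdlib Require Import ClassicalEpsilon.
Set Implicit Arguments. Unset Strict Implicit. Unset Printing Implicit Defensive.
Import Order.TTheory GRing.Theory Num.Theory.
Local Open Scope ring_scope.

Section Defs.
Variables (R : realFieldType) (n : nat).
Implicit Types (A B M W : 'M[R]_n) (S As Bs : seq 'M[R]_n).

Definition projector M := M^T = M /\ M *m M = M.

(* M is the orthogonal projector onto the subspace W (= row space of W) *)
Definition orth_proj_onto M W := projector M /\ (M == W)%MS.

Definition mutually_orth S :=
  forall M1 M2, M1 \in S -> M2 \in S -> M1 != M2 -> M1 *m M2 = 0.

(* orthogonal decomposition of the subspace W (a finite set, as a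
   duplicate-free list) *)
Definition orth_decomp S W :=
  [/\ uniq S, (forall M, M \in S -> M != 0 /\ projector M),
      mutually_orth S & orth_proj_onto (\sum_(M <- S) M) W].

Definition fob A B := exists lam : R, B *m A *m B = lam *: B.

Definition eff A B : R :=
  epsilon (inhabits 0) (fun lam : R => B *m A *m B = lam *: B).

Definition tri A B := (eff A B)^-1 *: (A *m B *m A).

Definition struct_bal Bs As :=
  [/\ (forall A, A \in As -> projector A), mutually_orth As,
      (forall B, B \in Bs -> projector B),
      (forall A B, A \in As -> B \in Bs -> fob A B) &
      (forall A B1 B2, A \in As -> B1 \in Bs -> B2 \in Bs -> B1 != B2 ->
         B1 *m A *m B2 = 0)].

Definition vdash A Bs := A - \sum_(B <- Bs | eff A B != 0) tri A B.

Definition triset As Bs : seq 'M[R]_n :=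
  [seq M <- [seq tri A B | A <- As, B <- [seq B <- Bs | eff A B != 0]]
            ++ [seq vdash A Bs | A <- As] | M != 0].

End Defs.

(* Main.v *)
Require Import Defs.
From HB Require Import structures.
From mathcomp Require Import all_boot all_order all_algebra.
From Stdlib Require Import ClassicalEpsilon.
Import Order.TTheory GRing.Theory Num.Theory.
Local Open Scope ring_scope.
Set Implicit Arguments. Unset Strict Implicit.

Lemma mtm_eq0 (R : realFieldType) (n : nat) (M : 'M[R]_n) :
  M^T *m M = 0 -> M = 0.
Proof.
move=> H; apply/matrixP => i j.
have := congr1 (fun A : 'M[R]_n => A j j) H; rewrite !mxE.
under eq_bigr do rewrite mxE.
move=> /psumr_eq0P H2.
have := H2 (fun k _ => ltac:(by rewrite -expr2 sqr_ge0)) i isT.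
by move=> /eqP; rewrite mulf_eq0 orbb => /eqP.
Qed.

Lemma trmx_sumE (R : realFieldType) (n : nat) (s : seq 'M[R]_n) (F : 'M[R]_n -> 'M[R]_n) :
  (\sum_(x <- s) F x)^T = \sum_(x <- s) (F x)^T.
Proof. by rewrite (raddf_sum (@trmx R n n)). Qed.

Lemma trmxBE (R : realFieldType) (n : nat) (A B : 'M[R]_n) : (A - B)^T = A^T - B^T.
Proof. exact: (raddfB (@trmx R n n)). Qed.

Lemma trmxZE (R : realFieldType) (n : nat) (a : R) (A : 'M[R]_n) : (a *: A)^T = a *: A^T.
Proof. by apply/matrixP => i j; rewrite !mxE. Qed.

Lemma eff_spec (R : realFieldType) (n : nat) (A B : 'M[R]_n) :
  fob A B -> B *m A *m B = eff A B *: B.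
Proof. by move=> H; rewrite /eff; apply: (epsilon_spec (inhabits 0) _ H). Qed.

Lemma eff_uniq (R : realFieldType) (n : nat) (A B : 'M[R]_n) lam :
  B != 0 -> B *m A *m B = lam *: B -> eff A B = lam.
Proof.
move=> Bnz H; have E := eff_spec (ex_intro _ lam H); rewrite H in E.
move/eqP: E; rewrite -subr_eq0 -scalerBl scaler_eq0 (negbTE Bnz) orbF subr_eq0.
by move/eqP.
Qed.

Lemma proj_zero (R : realFieldType) (n : nat) (P Q : 'M[R]_n) :
  projector P -> projector Q -> Q *m P *m Q = 0 -> P *m Q = 0 /\ Q *m P = 0.
Proof.
move=> [PT PP] [QT QQ] H.
have H1 : P *m Q = 0.
  apply: mtm_eq0; rewrite trmx_mul PT QT mulmxA -(mulmxA Q P P) PP //.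
by split=> //; rewrite -[Q]QT -[P]PT -trmx_mul H1 trmx0.
Qed.

Lemma tri_proj (R : realFieldType) (n : nat) (P Q : 'M[R]_n) :
  projector P -> projector Q -> fob P Q -> projector (tri P Q).
Proof.
move=> [PT PP] [QT QQ] /eff_spec E; rewrite /tri; split.
  by rewrite trmxZE !trmx_mul PT QT mulmxA.
rewrite -scalemxAl -scalemxAr scalerA.
have -> : P *m Q *m P *m (P *m Q *m P) = eff P Q *: (P *m Q *m P).
  have -> : P *m Q *m P *m (P *m Q *m P) = P *m (Q *m P *m Q) *m P.
    by rewrite !mulmxA -(mulmxA (P *m Q) P P) PP.
  by rewrite E -scalemxAr -scalemxAl.
rewrite scalerA; case: (eqVneq (eff P Q) 0) => [->|e0]; first by rewrite invr0 !mul0r.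
by rewrite -mulrA mulVf ?mulr1.
Qed.

Definition locbal (R : realFieldType) (n : nat) (P : 'M[R]_n) (Qs : seq 'M[R]_n) :=
  [/\ projector P, (forall Q, Q \in Qs -> projector Q /\ fob P Q),
      (forall Q1 Q2, Q1 \in Qs -> Q2 \in Qs -> Q1 != Q2 -> Q1 *m P *m Q2 = 0)
      & uniq Qs].

Lemma tri0 (R : realFieldType) (n : nat) (P Q : 'M[R]_n) : eff P Q = 0 -> tri P Q = 0.
Proof. by move=> e; rewrite /tri e invr0 scale0r. Qed.

Lemma vdashE (R : realFieldType) (n : nat) (P : 'M[R]_n) Qs :
  vdash P Qs = P - \sum_(Q <- Qs) tri P Q.
Proof.
rewrite /vdash big_mkcond /=; congr (_ - _); apply: eq_bigr => Q _.
by case: eqP => // /tri0 ->.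
Qed.

Lemma tri_under (R : realFieldType) (n : nat) (P Q : 'M[R]_n) :
  projector P -> P *m tri P Q = tri P Q /\ tri P Q *m P = tri P Q.
Proof.
move=> [_ PP]; rewrite /tri -scalemxAr -scalemxAl; split; congr (_ *: _).
  by rewrite !mulmxA PP.
by rewrite -!mulmxA PP.
Qed.

Lemma tri_orth (R : realFieldType) (n : nat) (P Q1 Q2 : 'M[R]_n) :
  projector P -> Q1 *m P *m Q2 = 0 -> tri P Q1 *m tri P Q2 = 0.
Proof.
move=> [_ PP] H; rewrite /tri -scalemxAr -scalemxAl.
have -> : P *m Q1 *m P *m (P *m Q2 *m P) = P *m (Q1 *m P *m Q2) *m P.
  by rewrite !mulmxA -(mulmxA (P *m Q1) P P) PP.
by rewrite H mulmx0 mul0mx !scaler0.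
Qed.

Lemma S_tri (R : realFieldType) (n : nat) (P Q : 'M[R]_n) Qs :
  locbal P Qs -> Q \in Qs ->
  (\sum_(Q' <- Qs) tri P Q') *m tri P Q = tri P Q /\
  tri P Q *m (\sum_(Q' <- Qs) tri P Q') = tri P Q.
Proof.
move=> [hP hQ hO hU] QQ.
have [_ idem] := tri_proj hP (proj1 (hQ Q QQ)) (proj2 (hQ Q QQ)).
rewrite mulmx_suml mulmx_sumr !(bigD1_seq Q) //= idem.
by split; rewrite big1_seq ?addr0 // => Q' /andP[nQ' Q'in];
  apply: tri_orth => //; apply: hO => //; rewrite eq_sym.
Qed.

Lemma vdash_facts (R : realFieldType) (n : nat) (P : 'M[R]_n) Qs :
  locbal P Qs ->
  [/\ projector (vdash P Qs), P *m vdash P Qs = vdash P Qs,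
      vdash P Qs *m P = vdash P Qs &
      forall Q, Q \in Qs -> tri P Q *m vdash P Qs = 0].
Proof.
move=> hb; have [hP hQ hO hU] := hb; have [PT PP] := hP.
rewrite vdashE; set S := \sum_(Q <- Qs) tri P Q.
have SS : S *m S = S.
  rewrite {1}/S mulmx_sumr; apply: eq_big_seq => Q QQ.
  exact: (S_tri hb QQ).1.
have ST : S^T = S.
  rewrite /S trmx_sumE; apply: eq_big_seq => Q QQ.
  by have [-> _] := tri_proj hP (proj1 (hQ Q QQ)) (proj2 (hQ Q QQ)).
have PS : P *m S = S.
  rewrite /S mulmx_sumr; apply: eq_big_seq => Q QQ; exact: (tri_under Q hP).1.
have SP : S *m P = S.
  rewrite /S mulmx_suml; apply: eq_big_seq => Q QQ; exact: (tri_under Q hP).2.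
split.
- split; first by rewrite trmxBE PT ST.
  by rewrite mulmxBl !mulmxBr PP PS SP SS subrr subr0.
- by rewrite mulmxBr PP PS.
- by rewrite mulmxBl PP SP.
- move=> Q QQ; rewrite mulmxBr (tri_under Q hP).2 (S_tri hb QQ).2 subrr //.
Qed.

Record ctx (R : realFieldType) (n : nat) (Ps Qs Rs : seq 'M[R]_n) : Prop := Ctx {
  cP : forall P, P \in Ps -> P != 0;
  cQ : forall Q, Q \in Qs -> Q != 0;
  cR : forall Rr, Rr \in Rs -> Rr != 0;
  cQu : uniq Qs;
  cRu : uniq Rs;
  cRo : mutually_orth Rs;
  cbQ : struct_bal Qs Ps;
  cbR : struct_bal Rs Ps;
  cH : forall P Q, P \in Ps -> Q \in Qs -> P *m Q != 0 ->
     P *m (\sum_(M <- Rs) M) != 0 -> tri P Q = P }.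

Section S.
Variables (R : realFieldType) (n : nat) (Ps Qs Rs : seq 'M[R]_n).
Let IR := \sum_(M <- Rs) M.

Lemma locbalQ : ctx Ps Qs Rs -> forall P, P \in Ps -> locbal P Qs.
Proof.
move=> c P PP; have [h1 _ h3 h4 h5] := cbQ c; split => //.
- by apply: h1.
- by move=> Q QQ; split; [apply: h3|apply: h4].
- by move=> Q1 Q2 ? ? ?; apply: h5.
- exact: cQu c.
Qed.

Lemma locbalR : ctx Ps Qs Rs -> forall P, P \in Ps -> locbal P Rs.
Proof.
move=> c P PP; have [h1 _ h3 h4 h5] := cbR c; split => //.
- by apply: h1.
- by move=> Q QQ; split; [apply: h3|apply: h4].
- by move=> Q1 Q2 ? ? ?; apply: h5.
- exact: cRu c.
Qed.

Lemma IR_R : ctx Ps Qs Rs -> forall Rr, Rr \in Rs -> IR *m Rr = Rr.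
Proof.
move=> c Rr RR; rewrite /IR mulmx_suml (bigD1_seq Rr) //=; last exact: cRu c.
have [_ _ h3 _ _] := cbR c; have [_ ->] := h3 _ RR.
rewrite big1_seq ?addr0 // => R' /andP[nR' R'in]; exact: (cRo c).
Qed.

Lemma PR0 : ctx Ps Qs Rs -> forall P Rr, P \in Ps -> Rr \in Rs -> P *m IR = 0 ->
  P *m Rr = 0 /\ Rr *m P = 0.
Proof.
move=> c P Rr PP RR H.
have E : P *m Rr = 0 by rewrite -(IR_R c RR) mulmxA H mul0mx.
have [h1 _ h3 _ _] := cbR c; have [PT _] := h1 _ PP; have [RT _] := h3 _ RR.
by split=> //; rewrite -[Rr]RT -[P]PT -trmx_mul E trmx0.
Qed.

Lemma effPR0 : ctx Ps Qs Rs -> forall P Rr, P \in Ps -> Rr \in Rs -> P *m IR = 0 ->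
  eff P Rr = 0.
Proof.
move=> c P Rr PP RR H; apply: eff_uniq; first exact: (cR c RR).
by have [_ ->] := PR0 c PP RR H; rewrite mul0mx scale0r.
Qed.

Lemma effPR_nz : ctx Ps Qs Rs -> forall P Rr, P \in Ps -> Rr \in Rs -> eff P Rr != 0 ->
  P *m IR != 0.
Proof. by move=> c P Rr PP RR; apply: contra => /eqP H; rewrite (effPR0 c PP RR H). Qed.

Lemma effPQ_nz : ctx Ps Qs Rs -> forall P Q, P \in Ps -> Q \in Qs -> eff P Q != 0 ->
  P *m Q != 0.
Proof.
move=> c P Q PP QQ; apply: contra => /eqP H; apply/eqP; apply: eff_uniq; first exact: (cQ c QQ).
by rewrite -mulmxA H mulmx0 scale0r.
Qed.

Lemma triP : ctx Ps Qs Rs -> forall P Q, P \in Ps -> Q \in Qs -> eff P Q != 0 ->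
  P *m IR != 0 -> tri P Q = P.
Proof. move=> c P Q PP QQ e H; apply: (cH c) => //; exact: effPQ_nz. Qed.

Lemma vdash_cases : ctx Ps Qs Rs -> forall P, P \in Ps -> P *m IR != 0 ->
  vdash P Qs = P \/ (vdash P Qs = 0 /\ exists2 Q, Q \in Qs & eff P Q != 0).
Proof.
move=> c P PP H; have hb := locbalQ c PP.
case: (boolP (has (fun Q => eff P Q != 0) Qs)) => [/hasP [Q QQ e]|/hasPn hn].
  right; split; last by exists Q.
  have [_ h2 _ h4] := vdash_facts hb.
  by rewrite -h2 -{1}(triP c PP QQ e H) h4.
left; rewrite /vdash big1_seq ?subr0 // => Q /andP[e QQ].
by have := hn _ QQ; rewrite e.
Qed.
End S.

Lemma mem_triset (R : realFieldType) (n : nat) (As Bs : seq 'M[R]_n) M :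
  M \in triset As Bs <-> M != 0 /\
   ((exists A B, [/\ A \in As, B \in Bs, eff A B != 0 & M = tri A B]) \/
    (exists2 A, A \in As & M = vdash A Bs)).
Proof.
rewrite /triset mem_filter mem_cat; split.
  case/andP=> nz /orP[/allpairsPdep [A [B [AA BB E]]] | /mapP [A AA E]];
    split=> //; [left | right; by exists A].
  by move: BB; rewrite mem_filter => /andP[e BB]; exists A, B.
case=> nz [[A [B [AA BB e E]]] | [A AA E]]; rewrite nz /=; apply/orP; [left|right].
  by apply/allpairsPdep; exists A, B; rewrite mem_filter e BB.
by apply/mapP; exists A.
Qed.

Section S2.
Variables (R : realFieldType) (n : nat) (Ps Qs Rs : seq 'M[R]_n).
Let IR := \sum_(M <- Rs) M.

Definition form P A := [/\ P \in Ps, A != 0 &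
   ((exists Q, [/\ Q \in Qs, eff P Q != 0 & A = tri P Q]) \/ A = vdash P Qs)].

Lemma triset_form A : A \in triset Ps Qs <-> exists P, form P A.
Proof.
rewrite mem_triset; split.
  case=> nz [[P [Q [PP QQ e E]]] | [P PP E]]; exists P; split => //.
    by left; exists Q.
  by right.
case=> P [PP nz [[Q [QQ e E]] | E]]; split => //; [left; by exists P, Q | right; by exists P].
Qed.

Lemma form_under (c : ctx Ps Qs Rs) P A : form P A ->
  [/\ projector A, P *m A = A & A *m P = A].
Proof.
case=> PP nz [[Q [QQ e ->]] | ->]; have hb := locbalQ c PP; have [hP hQ _ _] := hb.
  have [h1 h2] := tri_under Q hP; split => //.
  by apply: tri_proj => //; [exact: (hQ Q QQ).1 | exact: (hQ Q QQ).2].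
by have [h1 h2 h3 _] := vdash_facts hb.
Qed.

Lemma form_IR (c : ctx Ps Qs Rs) P A : form P A -> P *m IR != 0 -> A = P.
Proof.
case=> PP nz [[Q [QQ e ->]] | E] H; first exact: (triP c PP QQ e H).
by case: (vdash_cases c PP H) => [V|[V _]]; [rewrite E V | move: nz; rewrite E V eqxx].
Qed.

Lemma form_bal (c : ctx Ps Qs Rs) P A : form P A -> forall Rr1 Rr2, Rr1 \in Rs -> Rr2 \in Rs ->
  Rr1 *m A *m Rr2 = Rr1 *m P *m Rr2.
Proof.
move=> f Rr1 Rr2 R1 R2; have PP : P \in Ps by case: f.
case: (eqVneq (P *m IR) 0) => [H|H]; last by rewrite (form_IR c f H).
have [_ h] := PR0 c PP R1 H; have [_ hA _] := form_under c f.
by rewrite -hA mulmxA h !mul0mx.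
Qed.

End S2.

Section S3.
Variables (R : realFieldType) (n : nat) (Ps Qs Rs : seq 'M[R]_n).
Let IR := \sum_(M <- Rs) M.
Variable c : ctx Ps Qs Rs.

Lemma form_orth P1 P2 A1 A2 : form Ps Qs P1 A1 -> form Ps Qs P2 A2 -> A1 != A2 ->
  A1 *m A2 = 0.
Proof.
move=> f1 f2 ne.
have [pr1 u1 v1] := form_under c f1; have [pr2 u2 v2] := form_under c f2.
have [P1P _ _] := f1; have [P2P _ _] := f2.
case: (eqVneq P1 P2) => [eP|nP]; last first.
  have [_ hO _ _ _] := cbQ c.
  by rewrite -v1 -u2 -mulmxA (mulmxA P1) (hO _ _ P1P P2P nP) mul0mx mulmx0.
subst P2; have hb := locbalQ c P1P; have [hP hQ hOQ _] := hb.
have [vp _ _ vt] := vdash_facts hb.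
case: f1 => _ _ [[Q1 [Q1Q _ E1]] | E1]; case: f2 => _ _ [[Q2 [Q2Q _ E2]] | E2].
- rewrite E1 E2; apply: tri_orth => //; apply: hOQ => //.
  by apply: contraNneq ne => eQ; rewrite E1 E2 eQ.
- by rewrite E1 E2 vt.
- have [T1 _] := pr1; have [T2 _] := pr2.
  by rewrite -T1 -T2 -trmx_mul E1 E2 (vt _ Q2Q) trmx0.
- by move: ne; rewrite E1 E2 eqxx.
Qed.

Lemma tri_nz P Q : P \in Ps -> Q \in Qs -> eff P Q != 0 -> tri P Q != 0.
Proof.
move=> PP QQ e; apply/eqP => T.
have hb := locbalQ c PP; have [hP hQ _ _] := hb.
have E := eff_spec (hQ Q QQ).2.
have : P *m Q *m P = 0.
  move/eqP: T; rewrite /tri scaler_eq0 invr_eq0 (negbTE e) /=; by move/eqP.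
move=> /(congr1 (fun X => Q *m X *m Q)); rewrite mulmx0 mul0mx.
have -> : Q *m (P *m Q *m P) *m Q = (Q *m P *m Q) *m (P *m Q) by rewrite !mulmxA.
rewrite E -(scalemxAl (eff P Q) Q (P *m Q)) mulmxA E scalerA => /eqP.
rewrite scaler_eq0 mulf_eq0 orbb (negbTE e) /= => /eqP Q0.
by move: (cQ c QQ); rewrite Q0 eqxx.
Qed.

Lemma form_eff P A Rr : form Ps Qs P A -> Rr \in Rs -> eff A Rr = eff P Rr.
Proof.
move=> f RR; have [PP _ _] := f; apply: eff_uniq; first exact: (cR c RR).
rewrite (form_bal c f RR RR); apply: eff_spec.
by have [_ _ _ h4 _] := cbR c; apply: h4.
Qed.

Lemma form_IR0 P A : form Ps Qs P A -> P *m IR = 0 ->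
  (forall Rr, Rr \in Rs -> eff A Rr = 0) /\ vdash A Rs = A.
Proof.
move=> f H; have [PP _ _] := f.
have h : forall Rr, Rr \in Rs -> eff A Rr = 0.
  by move=> Rr RR; rewrite (form_eff f RR) (effPR0 c PP RR H).
split => //; rewrite /vdash big1_seq ?subr0 // => Rr /andP[e RR].
by move: e; rewrite h ?eqxx.
Qed.

Lemma P_in_triset P : P \in Ps -> P *m IR != 0 -> P \in triset Ps Qs.
Proof.
move=> PP H; apply/triset_form; exists P; split => //; first exact: (cP c PP).
case: (vdash_cases c PP H) => [V|[_ [Q QQ e]]]; first by right.
by left; exists Q; split => //; rewrite (triP c PP QQ e H).
Qed.

End S3.

Unset Implicit Arguments.
Theorem theorem2 (R : realFieldType) (n : nat) (U G : 'M[R]_n)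
  (Ps Qs Rs : seq 'M[R]_n) :
  orth_decomp Ps 1%:M -> orth_decomp Qs U -> orth_decomp Rs G ->
  struct_bal Qs Ps -> struct_bal Rs Ps ->
  (forall P Q, P \in Ps -> Q \in Qs -> P *m Q != 0 ->
     P *m (\sum_(M <- Rs) M) != 0 -> tri P Q = P) ->
  [/\ struct_bal Rs (triset Ps Qs),
      (forall P Q Rr, P \in Ps -> Q \in Qs -> Rr \in Rs -> eff P Q != 0 ->
         eff (tri P Q) Rr = eff P Rr),
      (forall P Rr, P \in Ps -> Rr \in Rs -> vdash P Qs != 0 ->
         eff (vdash P Qs) Rr = eff P Rr) &
      triset (triset Ps Qs) Rs =i
      [seq M <-
         [seq tri P Rr | P <- Ps, Rr <- [seq Rr <- Rs | eff P Rr != 0]]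
         ++ [seq vdash P Rs | P <- [seq P <- Ps | P *m (\sum_(M <- Rs) M) != 0]]
         ++ [seq tri P Q | P <- [seq P <- Ps | P *m (\sum_(M <- Rs) M) == 0],
                           Q <- [seq Q <- Qs | eff P Q != 0]]
         ++ [seq vdash P Qs | P <- [seq P <- Ps | P *m (\sum_(M <- Rs) M) == 0]]
       | M != 0]].
Proof.
move=> [_ dP _ _] [uQ dQ _ _] [uR dR oR _] bQ bR H.
have c : ctx Ps Qs Rs.
  split => //.
  - by move=> P /dP[h _].
  - by move=> Q /dQ[h _].
  - by move=> Rr /dR[h _].
set IR := \sum_(M <- Rs) M.
have [_ _ pR fR oRR] := bR.
split.
- split => //.
  + by move=> A /triset_form [P f]; have [] := form_under c f.
  + by move=> A1 A2 /triset_form [P1 f1] /triset_form [P2 f2]; exact: (form_orth c f1 f2).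
  + move=> A Rr /triset_form [P f] RR; exists (eff P Rr).
    by rewrite (form_bal c f RR RR); apply: eff_spec; apply: fR; case: f.
  + move=> A R1 R2 /triset_form [P f] R1R R2R ne.
    by rewrite (form_bal c f R1R R2R); apply: oRR => //; case: f.
- move=> P Q Rr PP QQ RR e; apply: (form_eff c _ RR); split => //.
    exact: (tri_nz c PP QQ e).
  by left; exists Q.
- move=> P Rr PP RR nz; apply: (form_eff c _ RR); split => //; by right.
move=> M; apply/idP/idP.
  move/mem_triset => [nz [[A [Rr [AA RR e E]]] | [A AA E]]];
    rewrite mem_filter nz /= !mem_cat; move/triset_form: AA => [P f]; have [PP _ _] := f.
    case: (eqVneq (P *m IR) 0) => [H0|H0].
      by move: e; rewrite ((form_IR0 c f H0).1 _ RR) eqxx.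
    rewrite (form_IR c f H0) in E; apply/orP; left; apply/allpairsPdep.
    by rewrite (form_IR c f H0) in e; exists P, Rr; split => //; rewrite mem_filter e RR.
  case: (eqVneq (P *m IR) 0) => [H0|H0]; last first.
    rewrite (form_IR c f H0) in E; apply/orP; right; apply/orP; left; apply/mapP.
    by exists P => //; rewrite mem_filter H0.
  rewrite (form_IR0 c f H0).2 in E; apply/orP; right; apply/orP; right.
  have PPf : P \in [seq P <- Ps | P *m IR == 0] by rewrite mem_filter H0 eqxx.
  case: f => _ _ [[Q [QQ e EQ]] | EQ]; rewrite E EQ.
    by apply/orP; left; apply/allpairsPdep; exists P, Q; split => //; rewrite mem_filter e QQ.
  by apply/orP; right; apply/mapP; exists P.
rewrite mem_filter => /andP[nz]; rewrite !mem_cat.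
case/orP => [/allpairsPdep [P [Rr [PP RRf E]]]|].
  move: RRf; rewrite mem_filter => /andP[e RR].
  apply/mem_triset; split => //; left; exists P, Rr; split => //.
  exact: (P_in_triset c PP (effPR_nz c PP RR e)).
case/orP => [/mapP [P PPf E]|].
  move: PPf; rewrite mem_filter => /andP[H0 PP].
  apply/mem_triset; split => //; right; exists P => //; exact: (P_in_triset c PP H0).
case/orP => [/allpairsPdep [P [Q [PPf QQf E]]]|/mapP [P PPf E]];
  move: PPf; rewrite mem_filter => /andP[/eqP H0 PP].
  move: QQf; rewrite mem_filter => /andP[e QQ].
  have f : form Ps Qs P M by split => //; left; exists Q.
  apply/mem_triset; split => //; right; exists M; first by apply/triset_form; exists P.
  by rewrite (form_IR0 c f H0).2.
have f : form Ps Qs P M by split => //; right.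
apply/mem_triset; split => //; right; exists M; first by apply/triset_form; exists P.
by rewrite (form_IR0 c f H0).2.
Qed.
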